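(* Let $N\in\mathbb{N}$ and let $F,G,H$ be positive-semidefinite $N\times N$ Hermitian matrices with $0\preceq H\preceq F$. Consider the semidefinite program \[ \min\ \operatorname{tr}[HX]\quad\text{s.t.}\quad \operatorname{tr}[FX]=1,\quad \operatorname{tr}[GX]=0,\quad X\succeq 0, \] over $N\times N$ Hermitian matrices $X$, and assume it is feasible. Then it is equivalent to the quadratic optimization problem \[ \min\ x^\dagger H x\quad\text{s.t.}\quad x^\dagger F x=1,\quad x\in\ker G,\quad x\perp(\ker F\cap\ker G), \] in the sense that both have the same optimal value and for every optimal $x$ of the quadratic problem, $X=xx^\dagger$ is optimal for the semidefinite program.
   Context: $A\preceq B$ means $B-A$ is positive-semidefinite. For a positive-semidefinite $G$, $x^\dagger Gx=0$ is equivalent to $x\in\ker G$. *)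

(* Defs.v *)
(* Complex matrices are modelled as 'M[R[i]]_N with
   R : realType (so R[i] is the field of complex numbers over the reals R). *)
From HB Require Import structures.
From mathcomp Require Import all_boot all_order all_algebra.
From mathcomp Require Import reals.
From mathcomp Require Import complex.
Set Implicit Arguments. Unset Strict Implicit. Unset Printing Implicit Defensive.
Import Order.TTheory GRing.Theory Num.Theory.
Local Open Scope ring_scope.

Section Defs.
Variable C : numClosedFieldType.

Definition adjmx m n (A : 'M[C]_(m, n)) : 'M[C]_(n, m) := (map_mx Num.conj A)^T.

Definition hermitian n (A : 'M[C]_n) : Prop := adjmx A = A.

Definition qform n (A : 'M[C]_n) (x : 'cV[C]_n) : C := (adjmx x *m A *m x) 0 0.

Definition psd n (A : 'M[C]_n) : Prop :=
  hermitian A /\ forall x : 'cV[C]_n, 0 <= qform A x.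

Definition loewner n (A B : 'M[C]_n) : Prop := psd (B - A).

Definition in_ker n (A : 'M[C]_n) (x : 'cV[C]_n) : Prop := A *m x = 0.

Definition sdp_feasible n (F G : 'M[C]_n) (X : 'M[C]_n) : Prop :=
  psd X /\ \tr (F *m X) = 1 /\ \tr (G *m X) = 0.

Definition sdp_optimal n (F G H : 'M[C]_n) (X : 'M[C]_n) : Prop :=
  sdp_feasible F G X /\
  forall Y, sdp_feasible F G Y -> \tr (H *m X) <= \tr (H *m Y).

Definition qp_feasible n (F G : 'M[C]_n) (x : 'cV[C]_n) : Prop :=
  qform F x = 1 /\ in_ker G x /\
  forall y : 'cV[C]_n, in_ker F y -> in_ker G y -> (adjmx y *m x) 0 0 = 0.

Definition qp_optimal n (F G H : 'M[C]_n) (x : 'cV[C]_n) : Prop :=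
  qp_feasible F G x /\
  forall y, qp_feasible F G y -> qform H x <= qform H y.

End Defs.

(* Main.v *)
Require Import Defs.
From HB Require Import structures.
From mathcomp Require Import all_boot all_order all_algebra.
From mathcomp Require Import reals.
From mathcomp Require Import complex.
Set Implicit Arguments. Unset Strict Implicit. Unset Printing Implicit Defensive.
Import Order.TTheory GRing.Theory Num.Theory.
Local Open Scope ring_scope.

Section Basics.
Variable C : numClosedFieldType.

Lemma adjmxE m n (A : 'M[C]_(m, n)) i j : adjmx A i j = (A j i)^*.
Proof. by rewrite /adjmx !mxE. Qed.

Lemma adjmxK m n (A : 'M[C]_(m, n)) : adjmx (adjmx A) = A.
Proof. by apply/matrixP=> i j; rewrite !adjmxE conjCK. Qed.

Lemma adjmxM m n p (A : 'M[C]_(m, n)) (B : 'M[C]_(n, p)) :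
  adjmx (A *m B) = adjmx B *m adjmx A.
Proof.
apply/matrixP=> i j; rewrite !mxE rmorph_sum; apply: eq_bigr => k _.
by rewrite !adjmxE rmorphM mulrC.
Qed.

Lemma adjmxD m n (A B : 'M[C]_(m, n)) : adjmx (A + B) = adjmx A + adjmx B.
Proof. by apply/matrixP=> i j; rewrite !(adjmxE, mxE) rmorphD. Qed.

Lemma adjmxN m n (A : 'M[C]_(m, n)) : adjmx (- A) = - adjmx A.
Proof. by apply/matrixP=> i j; rewrite !(adjmxE, mxE) rmorphN. Qed.

Lemma adjmxB m n (A B : 'M[C]_(m, n)) : adjmx (A - B) = adjmx A - adjmx B.
Proof. by rewrite adjmxD adjmxN. Qed.

Lemma adjmxZ m n a (A : 'M[C]_(m, n)) : adjmx (a *: A) = a^* *: adjmx A.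
Proof. by apply/matrixP=> i j; rewrite !(adjmxE, mxE) rmorphM. Qed.

Lemma adjmx0 m n : adjmx (0 : 'M[C]_(m, n)) = 0.
Proof. by apply/matrixP=> i j; rewrite !(adjmxE, mxE) rmorph0. Qed.

Lemma adjmx1 n : adjmx (1%:M : 'M[C]_n) = 1%:M.
Proof. by apply/matrixP=> i j; rewrite !(adjmxE, mxE) eq_sym rmorph_nat. Qed.

Lemma adjmx_diag n (d : 'rV[C]_n) :
  adjmx (diag_mx d) = diag_mx (map_mx Num.conj d).
Proof.
apply/matrixP=> i j; rewrite !(adjmxE, mxE) eq_sym.
by case: eqP => [->|]; rewrite ?mulr1n ?mulr0n ?rmorph0.
Qed.

Lemma adjmx_tstar m n (A : 'M[C]_(m, n)) : adjmx A = map_mx Num.conj (A^T).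
Proof. by apply/matrixP=> i j; rewrite !(adjmxE, mxE). Qed.

Lemma qformE n (A : 'M[C]_n) x :
  qform A x = \sum_i \sum_j (x i 0)^* * A i j * x j 0.
Proof.
rewrite /qform !mxE exchange_big /=; apply: eq_bigr => j _; rewrite !mxE big_distrl /=.
by apply: eq_bigr => i _; rewrite adjmxE.
Qed.

Lemma normv_eq0 n (x : 'cV[C]_n) : (adjmx x *m x) 0 0 = 0 -> x = 0.
Proof.
rewrite !mxE => /eqP; rewrite psumr_eq0 => [/allP H|i _]; last first.
  by rewrite adjmxE mulrC mul_conjC_ge0.
apply/matrixP=> i j; rewrite ord1 mxE.
have /implyP := H i (mem_index_enum _); rewrite adjmxE mulrC mul_conjC_eq0.
by move=> /(_ isT) /eqP.
Qed.

Lemma normv_ge0 n (x : 'cV[C]_n) : 0 <= (adjmx x *m x) 0 0.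
Proof.
by rewrite mxE sumr_ge0 // => i _; rewrite adjmxE mulrC mul_conjC_ge0.
Qed.


Lemma adjmx_delta m n (i : 'I_m) (j : 'I_n) :
  adjmx (delta_mx i j : 'M[C]_(m, n)) = delta_mx j i.
Proof.
apply/matrixP=> a b; rewrite !(adjmxE, mxE).
by case: (a == j); case: (b == i); rewrite /= ?rmorph1 ?rmorph0.
Qed.

Lemma qform_diag n (e : 'rV[C]_n) (v : 'cV[C]_n) :
  qform (diag_mx e) v = \sum_i (v i 0)^* * e 0 i * v i 0.
Proof.
rewrite /qform mul_mx_diag !mxE; apply: eq_bigr => i _; rewrite !mxE.
by [].
Qed.

Lemma normvE n (v : 'cV[C]_n) : (adjmx v *m v) 0 0 = \sum_i (v i 0)^* * v i 0.
Proof. by rewrite mxE; apply: eq_bigr => i _; rewrite adjmxE. Qed.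

Lemma ex_min_real (I : eqType) (s : seq I) (f : I -> C) (x0 : I) :
  (forall i, f i \is Num.real) -> exists j, forall i, i \in s -> f j <= f i.
Proof.
move=> fR; elim: s => [|a s [j IH]]; first by exists x0.
have /orP[le|le] := real_leVge (fR a) (fR j).
  exists a => i; rewrite inE => /orP[/eqP->//|/IH]; exact: le_trans.
by exists j => i; rewrite inE => /orP[/eqP->//|/IH].
Qed.

Lemma qform_real n (M : 'M[C]_n) x : adjmx M = M -> qform M x \is Num.real.
Proof.
move=> hM; apply/CrealP.
have -> : (qform M x)^* = (adjmx (adjmx x *m M *m x)) 0 0.
  by rewrite /qform /adjmx !mxE.
by rewrite !adjmxM adjmxK hM mulmxA.
Qed.

Section SpecData.
Variables (n : nat) (A : 'M[C]_n).
Hypothesis hA : adjmx A = A.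
Let U := spectralmx A.
Let d := spectral_diag A.

Lemma spec_unit1 : U *m adjmx U = 1%:M.
Proof. by rewrite adjmx_tstar; apply/unitarymxP/spectral_unitarymx. Qed.

Lemma spec_unit2 : adjmx U *m U = 1%:M.
Proof. exact: mulmx1C spec_unit1. Qed.

Lemma spec_can1 m (X : 'M[C]_(m, n)) : X *m U *m adjmx U = X.
Proof. by rewrite -mulmxA spec_unit1 mulmx1. Qed.

Lemma spec_can2 m (X : 'M[C]_(m, n)) : X *m adjmx U *m U = X.
Proof. by rewrite -mulmxA spec_unit2 mulmx1. Qed.

Lemma spec_decomp : A = adjmx U *m diag_mx d *m U.
Proof.
have nA : A \is normalmx.
  by apply/normalmxP; rewrite -adjmx_tstar hA.
rewrite {1}(orthomx_spectralP nA) invmx_unitary ?spectral_unitarymx //.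
by rewrite -adjmx_tstar.
Qed.

Lemma spec_diagE : U *m A *m adjmx U = diag_mx d.
Proof.
by rewrite spec_decomp !mulmxA spec_unit1 mul1mx -mulmxA spec_unit1 mulmx1.
Qed.

Definition svec (i : 'I_n) : 'cV[C]_n := adjmx U *m delta_mx i 0.

Lemma qform_conj (B : 'M[C]_n) i : qform B (svec i) = (U *m B *m adjmx U) i i.
Proof.
rewrite /qform /svec adjmxM adjmx_delta adjmxK.
rewrite !mulmxA -colE -!mulmxA -rowE !mxE.
by [].
Qed.

Lemma spec_dE i : d 0 i = qform A (svec i).
Proof. by rewrite qform_conj spec_diagE mxE eqxx mulr1n. Qed.

Lemma spec_d_real i : d 0 i \is Num.real.
Proof. by rewrite spec_dE qform_real. Qed.

Lemma svec_norm i : (adjmx (svec i) *m svec i) 0 0 = 1.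
Proof.
have := qform_conj 1%:M i; rewrite /qform mulmx1 => ->.
by rewrite mulmx1 spec_unit1 mxE eqxx.
Qed.

Lemma diag_mul_delta (e : 'rV[C]_n) i :
  diag_mx e *m delta_mx i 0 = e 0 i *: (delta_mx i 0 : 'cV[C]_n).
Proof.
rewrite mul_diag_mx; apply/matrixP => a b; rewrite !mxE.
by case: eqP => [->|]; rewrite ?mulr1 ?mulr0.
Qed.

Lemma spec_eigen i : A *m svec i = d 0 i *: svec i.
Proof.
rewrite {1}spec_decomp /svec -!mulmxA [U *m (_ *m _)]mulmxA spec_unit1 mul1mx.
by rewrite diag_mul_delta scalemxAr.
Qed.

Lemma qform_spec (w : 'cV[C]_n) : qform A w = qform (diag_mx d) (U *m w).
Proof.
by rewrite /qform spec_decomp adjmxM !mulmxA.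
Qed.

Lemma norm_spec (w : 'cV[C]_n) : (adjmx w *m w) 0 0 = (adjmx (U *m w) *m (U *m w)) 0 0.
Proof.
by rewrite adjmxM -mulmxA [adjmx U *m _]mulmxA spec_unit2 mul1mx.
Qed.

Lemma rayleigh (i0 : 'I_n) : exists j,
  [/\ (adjmx (svec j) *m svec j) 0 0 = 1, A *m svec j = d 0 j *: svec j,
      d 0 j \is Num.real &
      forall w, d 0 j * (adjmx w *m w) 0 0 <= qform A w].
Proof.
have [j Hj] := @ex_min_real _ (enum 'I_n) (fun i => d 0 i) i0 spec_d_real.
exists j; split; [exact: svec_norm | exact: spec_eigen | exact: spec_d_real|].
move=> w; rewrite qform_spec norm_spec qform_diag normvE mulr_sumr.
apply: ler_sum => i _; rewrite mulrAC mulrC.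
apply: ler_wpM2l; first by rewrite mulrC mul_conjC_ge0.
by apply: Hj; rewrite mem_enum.
Qed.

Lemma trace_spec (B : 'M[C]_n) : \tr (B *m A) = \sum_i d 0 i * qform B (svec i).
Proof.
rewrite spec_decomp !mulmxA mxtrace_mulC !mulmxA mul_mx_diag /mxtrace.
by apply: eq_bigr => i _; rewrite mxE qform_conj mulrC.
Qed.

Definition kproj : 'M[C]_n :=
  adjmx U *m diag_mx (\row_i ((d 0 i == 0)%:R)) *m U.

Lemma kproj_herm : adjmx kproj = kproj.
Proof.
rewrite /kproj !adjmxM adjmxK adjmx_diag mulmxA; congr (_ *m _ *m _).
by apply/matrixP => a b; rewrite !mxE rmorph_nat.
Qed.

Lemma diag_mxMM (a b : 'rV[C]_n) :
  diag_mx a *m diag_mx b = diag_mx (\row_i (a 0 i * b 0 i)).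
Proof.
rewrite mul_diag_mx; apply/matrixP => i j; rewrite !mxE.
by case: eqP => [->|]; rewrite ?mulr1n ?mulr0n ?mulr0.
Qed.

Lemma kproj_idem : kproj *m kproj = kproj.
Proof.
rewrite /kproj -!mulmxA [U *m (_ *m _)]mulmxA spec_unit1 mul1mx.
rewrite !mulmxA -[_ *m diag_mx _ *m diag_mx _]mulmxA diag_mxMM; congr (_ *m _ *m _).
by congr diag_mx; apply/matrixP => a b; rewrite !mxE; case: (_ == _); rewrite ?mulr1 ?mulr0.
Qed.

Lemma kproj_ker : A *m kproj = 0.
Proof.
rewrite /kproj spec_decomp -!mulmxA [U *m (_ *m _)]mulmxA spec_unit1 mul1mx.
rewrite !mulmxA -[_ *m diag_mx _ *m diag_mx _]mulmxA diag_mxMM.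
set D := diag_mx _; suff -> : D = 0 by rewrite mulmx0 mul0mx.
apply/matrixP => a b; rewrite !mxE.
by case: eqP => [->|_]; rewrite ?mul0r ?mulr0 ?mul0rn.
Qed.

Lemma kproj_fix (v : 'cV[C]_n) : A *m v = 0 -> kproj *m v = v.
Proof.
rewrite spec_decomp -mulmxA => /(congr1 (mulmx U)).
rewrite mulmx0 !mulmxA spec_unit1 mul1mx -mulmxA => Hv.
have Hv' : diag_mx (\row_i ((d 0 i == 0)%:R)) *m (U *m v) = U *m v.
  apply/matrixP => a b; have /matrixP /(_ a b) := Hv.
  rewrite !mul_diag_mx !mxE => /eqP; rewrite mulf_eq0.
  by case: eqP => [_ _|_ /= /eqP->]; rewrite ?mul1r ?mul0r.
by rewrite /kproj -!mulmxA Hv' mulmxA spec_unit2 mul1mx.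
Qed.

End SpecData.

Lemma qformB n (A B : 'M[C]_n) x : qform (A - B) x = qform A x - qform B x.
Proof. by rewrite /qform mulmxBr mulmxBl !mxE. Qed.

Lemma qformZv n (A : 'M[C]_n) a x : qform A (a *: x) = a^* * a * qform A x.
Proof.
rewrite /qform adjmxZ -scalemxAl -scalemxAl -scalemxAr !mxE.
by rewrite mulrA.
Qed.

Lemma qform_sub_ker n (B : 'M[C]_n) y v :
  adjmx B = B -> B *m v = 0 -> qform B (y - v) = qform B y.
Proof.
move=> hB Bv; have vB : adjmx v *m B = 0 by rewrite -hB -adjmxM Bv adjmx0.
rewrite /qform adjmxB mulmxBl vB subr0.
by rewrite mulmxBr -(mulmxA _ B v) Bv mulmx0 subr0.
Qed.

Lemma qform_mulP n (A P : 'M[C]_n) x :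
  qform (adjmx P *m A *m P) x = qform A (P *m x).
Proof. by rewrite /qform adjmxM !mulmxA. Qed.

Lemma psd_spec_ge0 n (A : 'M[C]_n) i : psd A -> 0 <= spectral_diag A 0 i.
Proof. by move=> [hA pA]; rewrite spec_dE. Qed.

Lemma psd_ker n (A : 'M[C]_n) x : psd A -> qform A x = 0 -> A *m x = 0.
Proof.
move=> pA; have [hA _] := pA; set U := spectralmx A; set d := spectral_diag A.
rewrite qform_spec // qform_diag => H0.
rewrite (spec_decomp hA) -mulmxA -/U -/d -mulmxA.
have Hge : forall i, true -> 0 <= ((U *m x) i 0)^* * d 0 i * (U *m x) i 0.
  move=> j _; rewrite mulrAC; apply: mulr_ge0; last exact: psd_spec_ge0.
  by rewrite mulrC mul_conjC_ge0.
have H1 : forall i, (U *m x) i 0 * d 0 i = 0.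
  move=> i; have := psumr_eq0P Hge H0 (i:=i) isT; move/eqP.
  rewrite mulrAC mulf_eq0 => /orP[|/eqP->]; last by rewrite mulr0.
  by rewrite mulrC mul_conjC_eq0 => /eqP->; rewrite mul0r.
have -> : diag_mx d *m (U *m x) = 0.
  apply/matrixP => a b; rewrite mul_diag_mx mxE [in RHS]mxE ord1 mulrC; exact: H1.
by rewrite mulmx0.
Qed.

Lemma qform_ge0_real n (A : 'M[C]_n) x : psd A -> 0 <= qform A x.
Proof. by case=> _ ->. Qed.

Lemma mx11M (a : 'rV[C]_1) (b : 'cV[C]_1) : (a *m b) 0 0 = a 0 0 * b 0 0.
Proof. by rewrite mxE big_ord1. Qed.

Lemma sum_neq0 (I : finType) (f : I -> C) : \sum_i f i != 0 -> exists i, f i != 0.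
Proof.
move=> H; apply/existsP; apply: contraR H; rewrite negb_exists => /forallP Hf.
by rewrite big1 // => i _; apply/eqP; move: (Hf i); rewrite negbK.
Qed.

Lemma rank1_psd n (x : 'cV[C]_n) : psd (x *m adjmx x).
Proof.
split; first by rewrite /Defs.hermitian adjmxM adjmxK.
move=> w; rewrite /qform !mulmxA -mulmxA mx11M.
have -> : (adjmx w *m x) 0 0 = ((adjmx x *m w) 0 0)^*.
  by rewrite -adjmxE adjmxM adjmxK.
by rewrite mulrC mul_conjC_ge0.
Qed.

Lemma trace_rank1 n (B : 'M[C]_n) x : \tr (B *m (x *m adjmx x)) = qform B x.
Proof. by rewrite mulmxA mxtrace_mulC mulmxA trace_mx11. Qed.

Lemma qformD n (A B : 'M[C]_n) x : qform (A + B) x = qform A x + qform B x.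
Proof. by rewrite /qform mulmxDr mulmxDl !mxE. Qed.

Lemma herm_move n (Q : 'M[C]_n) (v w : 'cV[C]_n) :
  adjmx Q = Q -> adjmx (Q *m v) *m w = adjmx v *m (Q *m w).
Proof. by move=> hQ; rewrite adjmxM hQ mulmxA. Qed.

Lemma herm_conj n (A Q : 'M[C]_n) :
  adjmx A = A -> adjmx (adjmx Q *m A *m Q) = adjmx Q *m A *m Q.
Proof. by move=> hA; rewrite !adjmxM adjmxK hA mulmxA. Qed.

Section Main.
Variables (n : nat) (F G H : 'M[C]_n).
Hypotheses (pF : psd F) (pG : psd G) (pH : psd H) (pFH : psd (F - H)).

Let hF : adjmx F = F. Proof. by case: pF. Qed.
Let hG : adjmx G = G. Proof. by case: pG. Qed.
Let hH : adjmx H = H. Proof. by case: pH. Qed.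

Let P := kproj G.
Let F1 := adjmx P *m F *m P.
Let H1 := adjmx P *m H *m P.
Let P1 := kproj F1.

Let hP : adjmx P = P. Proof. exact: kproj_herm. Qed.
Let PP : P *m P = P. Proof. exact: kproj_idem. Qed.
Let GP : G *m P = 0. Proof. exact: kproj_ker. Qed.
Let Pfix (x : 'cV[C]_n) : G *m x = 0 -> P *m x = x. Proof. exact: kproj_fix. Qed.

Let hF1 : adjmx F1 = F1. Proof. exact: herm_conj. Qed.
Let hH1 : adjmx H1 = H1. Proof. exact: herm_conj. Qed.
Let pF1 : psd F1. Proof. by split=> // x; rewrite qform_mulP; case: pF. Qed.
Let pH1 : psd H1. Proof. by split=> // x; rewrite qform_mulP; case: pH. Qed.
Let le_H1F1 (x : 'cV[C]_n) : qform H1 x <= qform F1 x.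
Proof. by rewrite -subr_ge0 !qform_mulP -qformB; case: pFH. Qed.

Let hP1 : adjmx P1 = P1. Proof. exact: kproj_herm. Qed.
Let P1P1 : P1 *m P1 = P1. Proof. exact: kproj_idem. Qed.
Let F1P1 : F1 *m P1 = 0. Proof. exact: kproj_ker. Qed.
Let P1fix (x : 'cV[C]_n) : F1 *m x = 0 -> P1 *m x = x. Proof. exact: kproj_fix. Qed.
Let F1P1v (v : 'cV[C]_n) : F1 *m (P1 *m v) = 0. Proof. by rewrite mulmxA F1P1 mul0mx. Qed.
Let H1P1v (v : 'cV[C]_n) : H1 *m (P1 *m v) = 0.
Proof.
apply: psd_ker => //; apply/eqP; rewrite eq_le qform_ge0_real // andbT.
by apply: le_trans (le_H1F1 _) _; rewrite /qform -mulmxA F1P1v mulmx0 mxE.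
Qed.

Definition feas1 (x : 'cV[C]_n) := P1 *m x = 0 /\ qform F1 x = 1.

Lemma FE (x : 'cV[C]_n) : qp_feasible F G x <-> feas1 x.
Proof.
split.
  move=> [qx [Gx orth]]; have Px := Pfix Gx.
  split; last by rewrite qform_mulP Px.
  apply: normv_eq0; rewrite herm_move // (mulmxA P1 P1) P1P1.
  have -> : adjmx x *m (P1 *m x) = adjmx (P *m (P1 *m x)) *m x.
    by rewrite herm_move // Px herm_move.
  apply: orth; last by rewrite /in_ker mulmxA GP mul0mx.
  by apply: psd_ker => //; rewrite -qform_mulP /qform -mulmxA F1P1v mulmx0 mxE.
move=> [P1x qx].
have Px : P *m x = x.
  have P1v : P1 *m (x - P *m x) = x - P *m x.
    apply: P1fix; rewrite /F1 -mulmxA mulmxBr mulmxA PP subrr mulmx0.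
    by [].
  have vP : adjmx (x - P *m x) *m (P *m x) = 0.
    by rewrite adjmxB mulmxBl herm_move // (mulmxA P P) PP subrr.
  apply/eqP; rewrite eq_sym -subr_eq0; apply/eqP/normv_eq0.
  rewrite [adjmx _ *m (x - _)]mulmxBr vP subr0.
  by rewrite -P1v herm_move // P1x mulmx0 mxE.
have Gx : G *m x = 0 by rewrite -Px mulmxA GP mul0mx.
split; first by rewrite -Px -qform_mulP.
split=> // y Fy Gy.
have P1y : P1 *m y = y.
  by apply: P1fix; rewrite /F1 -mulmxA (Pfix Gy) -mulmxA Fy mulmx0.
by rewrite -P1y herm_move // P1x mulmx0 mxE.
Qed.

Lemma qformH_feas (x : 'cV[C]_n) : qp_feasible F G x -> qform H x = qform H1 x.
Proof. by move=> [_ [Gx _]]; rewrite qform_mulP Pfix. Qed.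

Lemma normalize (y0 : 'cV[C]_n) : qform F1 y0 != 0 ->
  let c := qform F1 y0 in let y := (sqrtC c)^-1 *: (y0 - P1 *m y0) in
  feas1 y /\ qform H1 y = c^-1 * qform H1 y0.
Proof.
move=> c0 c y.
have c_ge0 : 0 <= c by exact: qform_ge0_real.
have aa : ((sqrtC c)^-1)^* * (sqrtC c)^-1 = c^-1.
  rewrite geC0_conj ?invr_ge0 ?sqrtC_ge0 // -invfM -expr2 sqrtCK //.
split; [split|].
- by rewrite /y -scalemxAr mulmxBr mulmxA P1P1 subrr scaler0.
- by rewrite /y qformZv aa qform_sub_ker // mulVf.
- by rewrite /y qformZv aa qform_sub_ker.
Qed.

Definition tt (x : C) := if x == 0 then 0 else (sqrtC x)^-1.

Lemma tt_conj (x : C) : 0 <= x -> (tt x)^* = tt x.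
Proof.
by move=> x0; rewrite /tt; case: eqP => _; rewrite ?rmorph0 // geC0_conj ?invr_ge0 ?sqrtC_ge0.
Qed.

Lemma tt_sq (x : C) : 0 <= x -> tt x * x * tt x = (x != 0)%:R.
Proof.
move=> x0; rewrite /tt; case: eqP => [->|/eqP nz]; rewrite ?mul0r //=.
have sz : sqrtC x != 0 by rewrite sqrtC_eq0.
by rewrite -{2}(sqrtCK x) expr2 mulrA mulVf // mul1r mulfV.
Qed.

Lemma tt_sqrt (x : C) : 0 <= x -> tt x * sqrtC x = (x != 0)%:R.
Proof.
move=> x0; rewrite /tt; case: eqP => [->|/eqP nz]; rewrite ?mul0r //=.
by rewrite mulVf // sqrtC_eq0.
Qed.

Lemma tt_zero (x : C) : (x == 0)%:R * tt x = 0.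
Proof. by rewrite /tt; case: eqP; rewrite ?mul0r ?mulr0. Qed.

Lemma sqrt_zero (x : C) : (x == 0)%:R * sqrtC x = 0.
Proof. by case: eqP => [->|_]; rewrite ?sqrtC0 ?mulr0 ?mul0r. Qed.

Lemma sqrt_sq (x : C) : 0 <= x -> (sqrtC x)^* * sqrtC x = x.
Proof. by move=> x0; rewrite geC0_conj ?sqrtC_ge0 // -expr2 sqrtCK. Qed.

Lemma diag_mxMM' (a b c : 'rV[C]_n) : (forall i, a 0 i * b 0 i = c 0 i) ->
  diag_mx a *m diag_mx b = diag_mx c.
Proof.
move=> H0; rewrite diag_mxMM; congr diag_mx; apply/matrixP => i j.
by rewrite ord1 !mxE.
Qed.

Lemma diag0 : diag_mx (0 : 'rV[C]_n) = 0.
Proof. by apply/matrixP => a b; rewrite !mxE mul0rn. Qed.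

Lemma qp1_exists (y0 : 'cV[C]_n) (i0 : 'I_n) : qform F1 y0 != 0 ->
  exists x, feas1 x /\ forall y, feas1 y -> qform H1 x <= qform H1 y.
Proof.
move=> c0; have [[y1P y1q] _] := normalize c0.
set y1 := _ *: _ in y1P y1q.
set U := spectralmx F1; set d := spectral_diag F1.
have d0 i : 0 <= d 0 i by exact: psd_spec_ge0.
set Dt := diag_mx (\row_i tt (d 0 i)).
set Ds := diag_mx (\row_i sqrtC (d 0 i)).
set Z := diag_mx (\row_i (d 0 i == 0)%:R : 'rV[C]_n).
set Y := diag_mx (\row_i (d 0 i != 0)%:R : 'rV[C]_n).
have hDt : adjmx Dt = Dt.
  by rewrite adjmx_diag; congr diag_mx; apply/matrixP => a b; rewrite !mxE tt_conj.
have hZ : adjmx Z = Z.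
  by rewrite adjmx_diag; congr diag_mx; apply/matrixP => a b; rewrite !mxE rmorph_nat.
have hDs : adjmx Ds = Ds.
  rewrite adjmx_diag; congr diag_mx; apply/matrixP => a b.
  by rewrite !mxE geC0_conj // sqrtC_ge0.
have DtZ : Dt *m Z = 0.
  rewrite (@diag_mxMM' _ _ 0) ?diag0 // => i; rewrite !mxE mulrC tt_zero.
  by [].
have ZDt : Z *m Dt = 0.
  by rewrite (@diag_mxMM' _ _ 0) ?diag0 // => i; rewrite !mxE tt_zero.
have ZDs : Z *m Ds = 0.
  by rewrite (@diag_mxMM' _ _ 0) ?diag0 // => i; rewrite !mxE sqrt_zero.
have ZZ : Z *m Z = Z.
  by apply: diag_mxMM' => i; rewrite !mxE; case: (_ == _); rewrite ?mulr1 ?mulr0.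
have DtDs : Dt *m Ds = Y.
  by apply: diag_mxMM' => i; rewrite !mxE tt_sqrt.
have DsDs : adjmx Ds *m Ds = diag_mx d.
  rewrite hDs; apply: diag_mxMM' => i; rewrite !mxE.
  by rewrite -{1}(@geC0_conj _ (sqrtC (d 0 i))) ?sqrt_sq ?sqrtC_ge0.
have DtDDt : Dt *m diag_mx d *m Dt = Y.
  rewrite (@diag_mxMM' _ _ (\row_i (tt (d 0 i) * d 0 i))); last by move=> i; rewrite !mxE.
  by apply: diag_mxMM' => i; rewrite !mxE tt_sq.
have YZ : Y = 1%:M - Z.
  apply/matrixP => a b; rewrite !mxE.
  by case: (a == b); case: (_ == _); rewrite /= ?subrr ?subr0.
have P1E : P1 = adjmx U *m Z *m U by [].
set T := adjmx U *m Dt.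
have hT : adjmx T = Dt *m U by rewrite /T adjmxM adjmxK hDt.
set M := adjmx T *m H1 *m T.
set M2 := M + (Z + Z).
have hM : adjmx M = M by exact: herm_conj.
have hM2 : adjmx M2 = M2 by rewrite /M2 !adjmxD hM hZ.
have ZM : Z *m M = 0 by rewrite /M hT !mulmxA ZDt !mul0mx.
have qM w : qform M w = qform H1 (T *m w) by exact: qform_mulP.
have qFT w : qform F1 (T *m w) = qform Y w.
  rewrite -qform_mulP hT /T (spec_decomp hF1) -/U -/d.
  by rewrite !mulmxA !(spec_can1 F1) DtDDt.
have P1T w : P1 *m (T *m w) = 0.
  rewrite P1E /T !mulmxA (spec_can1 F1).
  by rewrite -(mulmxA _ Z Dt) ZDt mulmx0 mul0mx.
have qZ0 w : Z *m w = 0 -> qform Z w = 0.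
  by move=> Zw; rewrite /qform -mulmxA Zw mulmx0 mxE.
have feasW y : feas1 y -> let w := Ds *m (U *m y) in
    [/\ T *m w = y, Z *m w = 0 & (adjmx w *m w) 0 0 = 1].
  move=> [P1y qy] w; split.
  - rewrite /w /T -mulmxA (mulmxA Dt) DtDs YZ mulmxBl mul1mx mulmxBr.
    rewrite mulmxA (spec_unit2 F1) mul1mx !mulmxA -P1E P1y subr0.
    by [].
  - by rewrite /w mulmxA ZDs mul0mx.
  - rewrite /w adjmxM !mulmxA -(mulmxA _ (adjmx Ds) Ds) DsDs.
    by rewrite -qy (qform_spec hF1) /qform adjmxM !mulmxA.
have [j [z1 zeig mu_real ray]] := rayleigh hM2 i0.
set z := svec M2 j in z1 zeig ray; set mu : C := spectral_diag M2 0 j in zeig mu_real ray.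
have qM2 w : Z *m w = 0 -> qform M2 w = qform M w.
  by move=> Zw; rewrite /M2 !qformD qZ0 // addr0 addr0.
have opt y : feas1 y -> mu <= qform H1 y.
  move=> fy; have [Tw Zw nw] := feasW y fy.
  have := ray (Ds *m (U *m y)); rewrite nw mulr1 qM2 // qM Tw.
  by [].
have mu1 : mu <= 1.
  by rewrite -y1q; apply: le_trans (opt _ (conj y1P y1q)) (le_H1F1 _).
have Zz : Z *m z = 0.
  have : Z *m (M2 *m z) = mu *: (Z *m z).
    rewrite zeig. apply/matrixP => a b. rewrite !mxE mulr_sumr. apply: eq_bigr => k _. rewrite !mxE. by rewrite mulrCA.
  rewrite mulmxA /M2 !mulmxDr ZM add0r ZZ => E.
  have /eqP : (2%:R - mu) *: (Z *m z) = 0.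
    rewrite scalerBl -E scaler_nat mulr2n. by rewrite mulmxDl subrr.
  rewrite scaler_eq0 => /orP[|/eqP //]; rewrite subr_eq0 => /eqP mu2.
  by move: mu1; rewrite -mu2 -[X in _ <= X]/(1%:R) ler_nat.
exists (T *m z); split.
  split; first exact: P1T.
  by rewrite qFT YZ qformB /qform mulmx1 z1 -/(qform Z z) qZ0 // subr0.
move=> y fy; apply: le_trans (opt _ fy).
rewrite -qM -[qform M z](qM2 _ Zz) /qform -mulmxA zeig -scalemxAr mxE z1 mulr1.
by [].
Qed.

Lemma sdp_ker (X : 'M[C]_n) : psd X -> \tr (G *m X) = 0 ->
  forall i, spectral_diag X 0 i != 0 -> G *m svec X i = 0.
Proof.
move=> pX trG i di; have [hX _] := pX.
have Hge : forall k, true -> 0 <= spectral_diag X 0 k * qform G (svec X k).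
  by move=> k _; rewrite mulr_ge0 ?qform_ge0_real ?psd_spec_ge0.
have := psumr_eq0P Hge; rewrite -(trace_spec hX) => /(_ trG i isT) /eqP.
rewrite mulf_eq0 (negPf di) /= => /eqP; exact: psd_ker.
Qed.

Lemma qp_exists : (exists X, sdp_feasible F G X) -> exists x, qp_optimal F G H x.
Proof.
move=> [X [pX [trF trG]]]; have [hX _] := pX.
have : \sum_i spectral_diag X 0 i * qform F (svec X i) != 0.
  by rewrite -(trace_spec hX) trF oner_neq0.
move=> /sum_neq0 [i0]; rewrite mulf_eq0 negb_or => /andP[di qF].
have Gu := sdp_ker pX trG di.
have qF1 : qform F1 (svec X i0) != 0 by rewrite qform_mulP Pfix.
have [x [fx ox]] := qp1_exists i0 qF1.
exists x; split; first exact/FE.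
move=> y fy; rewrite !qformH_feas //; last exact/FE.
by apply: ox; apply/FE.
Qed.

Lemma sdp_lb (x : 'cV[C]_n) : qp_optimal F G H x ->
  forall Y, sdp_feasible F G Y -> qform H x <= \tr (H *m Y).
Proof.
move=> [fx ox] Y [pY [trF trG]]; have [hY _] := pY.
set l := qform H x.
have step1 y : G *m y = 0 -> l * qform F y <= qform H y.
  move=> Gy; have Py := Pfix Gy.
  have -> : qform F y = qform F1 y by rewrite qform_mulP Py.
  have -> : qform H y = qform H1 y by rewrite qform_mulP Py.
  have [c0|cn0] := eqVneq (qform F1 y) 0.
    by rewrite c0 mulr0 qform_ge0_real.
  have [fy' qy'] := normalize cn0.
  have := ox _ (proj2 (FE _) fy'); rewrite -/l (qformH_feas (proj2 (FE _) fy')) qy'.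
  move=> /(ler_wpM2l (qform_ge0_real y pF1)).
  by rewrite mulrA mulfV // mul1r mulrC.
rewrite (trace_spec hY) -[l]mulr1 -trF (trace_spec hY) mulr_sumr.
apply: ler_sum => i _.
have [d0|dn0] := eqVneq (spectral_diag Y 0 i) 0.
  by rewrite d0 !mul0r mulr0.
rewrite mulrCA; apply: ler_wpM2l; first exact: psd_spec_ge0.
by apply: step1; apply: sdp_ker.
Qed.

Lemma opt_rank1 (x : 'cV[C]_n) : qp_optimal F G H x ->
  sdp_optimal F G H (x *m adjmx x).
Proof.
move=> ox; have [[qF [Gx _]] _] := ox.
split; first split; first exact: rank1_psd.
  by rewrite !trace_rank1 qF /qform -mulmxA Gx mulmx0 mxE.
by move=> Y fY; rewrite trace_rank1; apply: sdp_lb.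
Qed.

Theorem main_gen : (exists X, sdp_feasible F G X) ->
  [/\ (exists X, sdp_optimal F G H X),
      (exists x, qp_optimal F G H x),
      (forall X x, sdp_optimal F G H X -> qp_optimal F G H x ->
                   \tr (H *m X) = qform H x) &
      (forall x, qp_optimal F G H x -> sdp_optimal F G H (x *m adjmx x))].
Proof.
move=> feas; have [x ox] := qp_exists feas.
split.
- by exists (x *m adjmx x); apply: opt_rank1.
- by exists x.
- move=> X y [fX oX] oy; apply/le_anti/andP; split.
    by rewrite -trace_rank1; apply: oX; case: (opt_rank1 oy).
  exact: sdp_lb.
- exact: opt_rank1.
Qed.

End Main.

End Basics.

Theorem proposition1 (R : realType) (N : nat) (F G H : 'M[R[i]]_N) :
  psd F -> psd G -> psd H -> loewner 0 H -> loewner H F ->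
  (exists X, sdp_feasible F G X) ->
  [/\ (exists X, sdp_optimal F G H X),
      (exists x, qp_optimal F G H x),
      (forall X x, sdp_optimal F G H X -> qp_optimal F G H x ->
                   \tr (H *m X) = qform H x) &
      (forall x, qp_optimal F G H x -> sdp_optimal F G H (x *m adjmx x))].
Proof.
move=> pF pG pH _ pHF; exact: (main_gen pF pG pH pHF).
Qed.
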